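(* Let $R$ be a commutative ring with identity, $\mathcal S$ an associative $R$-algebra with identity, $\mathcal M$ a $2$-torsion free bimodule over $\mathcal S$, $\delta$ a derivation on $\mathcal S$ and $f:\mathcal S\to\mathcal M$ a bimodule homomorphism over $\mathcal S$. If $D:\mathcal S\to\mathcal M$ is a Jordan $(\delta,f)$-derivation on $\mathcal M$, then for all $x,y,z\in\mathcal S$, $$D(xyz+zyx)=D(x)yz+D(z)yx+f(x)\delta(y)z+f(z)\delta(y)x+f(x)y\delta(z)+f(z)y\delta(x).$$
   Context: A derivation on $\mathcal S$ is an additive map $\delta$ with $\delta(ab)=\delta(a)b+a\delta(b)$. An additive map $D:\mathcal S\to\mathcal M$ is a Jordan $(\delta,f)$-derivation if $D(x^2)=D(x)x+f(x)\delta(x)$ for all $x\in\mathcal S$. $\mathcal M$ is $2$-torsion free if $2m=0$ implies $m=0$. *)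

(* Defs.v *)
From HB Require Import structures.
From mathcomp Require Import all_boot all_order all_algebra.
Set Implicit Arguments. Unset Strict Implicit. Unset Printing Implicit Defensive.
Import GRing.Theory.
Local Open Scope ring_scope.

Definition additive_map (A B : zmodType) (g : A -> B) : Prop :=
  forall a b, g (a + b) = g a + g b.

Record is_bimodule (S : ringType) (M : zmodType)
    (la : S -> M -> M) (ra : M -> S -> M) : Prop := {
  bm_laDl : forall a b m, la (a + b) m = la a m + la b m;
  bm_laDr : forall a m n, la a (m + n) = la a m + la a n;
  bm_raDl : forall m n a, ra (m + n) a = ra m a + ra n a;
  bm_raDr : forall m a b, ra m (a + b) = ra m a + ra m b;
  bm_la1  : forall m, la 1 m = m;
  bm_ra1  : forall m, ra m 1 = m;
  bm_laM  : forall a b m, la (a * b) m = la a (la b m);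
  bm_raM  : forall m a b, ra m (a * b) = ra (ra m a) b;
  bm_lra  : forall a m b, la a (ra m b) = ra (la a m) b }.

Definition two_torsion_free (M : zmodType) : Prop :=
  forall m : M, m *+ 2 = 0 -> m = 0.

Definition derivation (S : ringType) (delta : S -> S) : Prop :=
  additive_map delta /\ forall a b, delta (a * b) = delta a * b + a * delta b.

Definition bimodule_hom (S : ringType) (M : zmodType)
    (la : S -> M -> M) (ra : M -> S -> M) (f : S -> M) : Prop :=
  additive_map f /\ (forall a x, f (a * x) = la a (f x))
                 /\ (forall x a, f (x * a) = ra (f x) a).

Definition jordan_delta_f_derivation (S : ringType) (M : zmodType)
    (ra : M -> S -> M) (delta : S -> S) (f D : S -> M) : Prop :=
  additive_map D /\ forall x, D (x * x) = ra (D x) x + ra (f x) (delta x).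

(* Main.v *)
Require Import Defs.
From mathcomp Require Import all_boot all_order all_algebra.
Local Open Scope ring_scope.
Import GRing.Theory.

Ltac solve_front :=
  lazymatch goal with
  | |- ?c + ?t = ?a + _ =>
       first [ reflexivity
             | let E := fresh in
               eassert (E : t = a + _);
               [solve_front | exact: (etrans (congr1 (fun u => c + u) E) (addrCA c a _))] ]
  end.

Ltac ac_solve :=
  rewrite -[LHS]addr0 -[RHS]addr0 -?addrA;
  repeat (lazymatch goal with
          | |- ?a + ?l = ?r =>
            let E := fresh in
            eassert (E : r = a + _) by solve_front;
            apply: (etrans _ (esym E)); clear E; congr (a + _)
          end);
  reflexivity.

Theorem lemma3p6 (R : comRingType) (S : algType R) (M : zmodType)
    (la : S -> M -> M) (ra : M -> S -> M)
    (delta : S -> S) (f D : S -> M) :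
  is_bimodule la ra ->
  two_torsion_free M ->
  derivation delta ->
  bimodule_hom la ra f ->
  jordan_delta_f_derivation ra delta f D ->
  forall x y z : S,
    D (x * y * z + z * y * x) =
      ra (D x) (y * z) + ra (D z) (y * x)
    + ra (f x) (delta y * z) + ra (f z) (delta y * x)
    + ra (f x) (y * delta z) + ra (f z) (y * delta x).
Proof.
move=> BM TF [dD dM] [fD [_ fM]] [DD Dsq].
have raDl := bm_raDl BM; have raDr := bm_raDr BM; have raM := bm_raM BM.
have J : forall a b, D (a*b+b*a) = ra (D a) b + ra (D b) a
                                  + ra (f a) (delta b) + ra (f b) (delta a).
  move=> a b.
  have H := Dsq (a+b).
  have e : (a+b)*(a+b) = a*a + b*b + (a*b+b*a) by rewrite mulrDl !mulrDr; ac_solve.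
  rewrite e [D (a*a+b*b+_)]DD [D (a*a+b*b)]DD !Dsq [D (a+b)]DD fD dD !raDl !raDr in H.
  apply: (addrI (ra (D a) a + ra (f a) (delta a) + (ra (D b) b + ra (f b) (delta b)))).
  apply: (etrans (etrans _ H) _); ac_solve.
have K : forall a c, D (a*c*a) = ra (D a) (c*a) + ra (f a) (delta c * a)
                                 + ra (f a) (c * delta a).
  move=> a c.
  apply/eqP; rewrite -subr_eq0; apply/eqP; apply: TF.
  rewrite mulrnBl; apply/eqP; rewrite subr_eq0; apply/eqP.
  rewrite !mulr2n.
  have e : a*(a*c+c*a) + (a*c+c*a)*a = ((a*a)*c + c*(a*a)) + (a*c*a + a*c*a).
    by rewrite mulrDl !mulrDr ?mulrA; ac_solve.
  have H := J a (a*c+c*a).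
  rewrite e (DD (a*a*c + c*(a*a))) (DD (a*c*a)) (J (a*a) c) (J a c) Dsq fD !fM !dD !dM !raDl !raDr -!raM ?mulrDl ?mulrDr ?raDr ?mulrA in H.
  apply: (addrI (ra (D a) (a * c) + ra (f a) (delta a * c) + ra (D c) (a * a) +
       ra (f a) (a * delta c) + ra (f c) (delta a * a) + ra (f c) (a * delta a))).
  apply: (etrans (etrans _ H) _); ac_solve.
move=> x y z.
have H := K (x+z) y.
have e : (x+z)*y*(x+z) = x*y*x + z*y*z + (x*y*z + z*y*x)
  by rewrite !mulrDl !mulrDr ?mulrA; ac_solve.
rewrite e !DD !K ?fD ?dD ?raDl ?raDr ?mulrDl ?mulrDr ?raDr in H.
rewrite DD.
apply: (addrI (ra (D x) (y * x) + ra (f x) (delta y * x) + ra (f x) (y * delta x) +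
     (ra (D z) (y * z) + ra (f z) (delta y * z) + ra (f z) (y * delta z)))).
apply: (etrans (etrans _ H) _); ac_solve.
Qed.
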